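(* For every real rational function $R\not\equiv0$, $$\operatorname{Ind}_{\mathbb{P}\mathbb{R}}\Big(-\frac1R\Big)=\operatorname{Ind}_{\mathbb{P}\mathbb{R}}(R).$$
   Context: For a real rational function $R$ and a real pole $\omega_0$ of $R$ of odd order, $\operatorname{Ind}_{\omega_0}(R)=+1$ if $R(\omega_0-0)<0<R(\omega_0+0)$ and $-1$ if $R(\omega_0-0)>0>R(\omega_0+0)$; $\operatorname{Ind}_{-\infty}^{+\infty}(R)$ is the sum of these over all real poles of $R$ of odd order. Writing $R=f_1/f_0$, $R$ has a pole at $\infty$ of order $\deg f_1-\deg f_0$ when this is positive; if this order is odd, $\operatorname{Ind}_\infty(R)=+1$ if $R(+\infty)<0<R(-\infty)$ and $-1$ if $R(+\infty)>0>R(-\infty)$; otherwise $\operatorname{Ind}_\infty(R)=0$. Then $\operatorname{Ind}_{\mathbb{P}\mathbb{R}}(R)=\operatorname{Ind}_{-\infty}^{+\infty}(R)+\operatorname{Ind}_\infty(R)$. *)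

(* Defs.v *)
From HB Require Import structures.
From mathcomp Require Import all_boot all_order all_algebra.
From mathcomp Require Import boolp reals.
From mathcomp.real_closed Require Import polyrcf.
Set Implicit Arguments. Unset Strict Implicit. Unset Printing Implicit Defensive.
Import Order.TTheory GRing.Theory Num.Theory.
Local Open Scope ring_scope.

(* A real rational function is represented as R = f1 / f0 with f0 != 0,
   i.e. as the real function x |-> f1.[x] / f0.[x]. All notions below are
   invariant under changing the representation (p,q) ~ (r p, r q). *)
Section CauchyIndex.
Variable R : realType.
Implicit Types (w : R).

Definition ratfun_val (f1 f0 : {poly R}) (x : R) : R := f1.[x] / f0.[x].

(* order of the pole of f1/f0 at w (0 if w is not a pole) *)
Definition pole_order (f1 f0 : {poly R}) w : nat := (mup w f0 - mup w f1)%N.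

Definition neg_left (f1 f0 : {poly R}) w := exists2 e : R, 0 < e &
  forall x, w - e < x < w -> ratfun_val f1 f0 x < 0.
Definition pos_left (f1 f0 : {poly R}) w := exists2 e : R, 0 < e &
  forall x, w - e < x < w -> 0 < ratfun_val f1 f0 x.
Definition neg_right (f1 f0 : {poly R}) w := exists2 e : R, 0 < e &
  forall x, w < x < w + e -> ratfun_val f1 f0 x < 0.
Definition pos_right (f1 f0 : {poly R}) w := exists2 e : R, 0 < e &
  forall x, w < x < w + e -> 0 < ratfun_val f1 f0 x.

Definition neg_pinfty (f1 f0 : {poly R}) := exists M : R, forall x, M < x -> ratfun_val f1 f0 x < 0.
Definition pos_pinfty (f1 f0 : {poly R}) := exists M : R, forall x, M < x -> 0 < ratfun_val f1 f0 x.
Definition neg_ninfty (f1 f0 : {poly R}) := exists M : R, forall x, x < M -> ratfun_val f1 f0 x < 0.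
Definition pos_ninfty (f1 f0 : {poly R}) := exists M : R, forall x, x < M -> 0 < ratfun_val f1 f0 x.

Definition Ind_at (f1 f0 : {poly R}) w : int :=
  if odd (pole_order f1 f0 w) then
    if `[< neg_left f1 f0 w /\ pos_right f1 f0 w >] then 1
    else if `[< pos_left f1 f0 w /\ neg_right f1 f0 w >] then -1
    else 0
  else 0.

(* sum over all real poles: every real pole is a root of f0, and rootsR f0
   lists the distinct real roots of f0 (poles of even/zero order contribute 0) *)
Definition Ind_real (f1 f0 : {poly R}) : int := \sum_(w <- rootsR f0) Ind_at f1 f0 w.

(* order of the pole at infinity: deg f1 - deg f0 *)
Definition pole_order_infty (f1 f0 : {poly R}) : nat := ((size f1).-1 - (size f0).-1)%N.

Definition Ind_infty (f1 f0 : {poly R}) : int :=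
  if odd (pole_order_infty f1 f0) then
    if `[< neg_pinfty f1 f0 /\ pos_ninfty f1 f0 >] then 1
    else if `[< pos_pinfty f1 f0 /\ neg_ninfty f1 f0 >] then -1
    else 0
  else 0.

Definition Ind_PR (f1 f0 : {poly R}) : int := Ind_real f1 f0 + Ind_infty f1 f0.

End CauchyIndex.

(* Main.v *)
Require Import Defs.
From HB Require Import structures.
From mathcomp Require Import all_boot all_order all_algebra.
From mathcomp Require Import boolp reals.
From mathcomp.real_closed Require Import polyorder polyrcf qe_rcf_th.
From mathcomp Require Import ring lra zify.
Set Implicit Arguments. Unset Strict Implicit.
Import Order.TTheory GRing.Theory Num.Theory.
Local Open Scope ring_scope.

Lemma left_pick (R : realType) (w : R) (A B : R -> Prop) :
  (exists2 e : R, 0 < e & forall x, w - e < x < w -> A x) ->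
  (exists2 e : R, 0 < e & forall x, w - e < x < w -> B x) ->
  exists x, A x /\ B x.
Proof.
case=> e e0 HA [e' e0' HB]; set m := Num.min e e'.
have m0 : 0 < m by rewrite lt_min e0 e0'.
have me : m <= e by rewrite ge_min lexx.
have me' : m <= e' by rewrite ge_min lexx orbT.
exists (w - m / 2); split; [apply: HA | apply: HB]; apply/andP; split; lra.
Qed.

Lemma right_pick (R : realType) (w : R) (A B : R -> Prop) :
  (exists2 e : R, 0 < e & forall x, w < x < w + e -> A x) ->
  (exists2 e : R, 0 < e & forall x, w < x < w + e -> B x) ->
  exists x, A x /\ B x.
Proof.
case=> e e0 HA [e' e0' HB]; set m := Num.min e e'.
have m0 : 0 < m by rewrite lt_min e0 e0'.
have me : m <= e by rewrite ge_min lexx.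
have me' : m <= e' by rewrite ge_min lexx orbT.
exists (w + m / 2); split; [apply: HA | apply: HB]; apply/andP; split; lra.
Qed.

Lemma pinf_pick (R : realType) (A B : R -> Prop) :
  (exists M : R, forall x, M < x -> A x) ->
  (exists M : R, forall x, M < x -> B x) ->
  exists x, A x /\ B x.
Proof.
case=> M HA [M' HB]; exists (Num.max M M' + 1).
have h1 : M <= Num.max M M' by rewrite le_max lexx.
have h2 : M' <= Num.max M M' by rewrite le_max lexx orbT.
split; [apply: HA | apply: HB]; lra.
Qed.

Lemma ninf_pick (R : realType) (A B : R -> Prop) :
  (exists M : R, forall x, x < M -> A x) ->
  (exists M : R, forall x, x < M -> B x) ->
  exists x, A x /\ B x.
Proof.
case=> M HA [M' HB]; exists (Num.min M M' - 1).
have h1 : Num.min M M' <= M by rewrite ge_min lexx.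
have h2 : Num.min M M' <= M' by rewrite ge_min lexx orbT.
split; [apply: HA | apply: HB]; lra.
Qed.

Lemma sg_lt0 (R : realType) (y : R) : Num.sg y = -1 -> y < 0.
Proof. by move=> h; rewrite -sgr_cp0 h. Qed.
Lemma sg_gt0 (R : realType) (y : R) : Num.sg y = 1 -> 0 < y.
Proof. by move=> h; rewrite -sgr_cp0 h. Qed.

Lemma right_nb (R : realType) (p : {poly R}) w : p != 0 ->
  exists2 e : R, 0 < e & forall x, w < x < w + e -> Num.sg p.[x] = sgp_right p w.
Proof.
move=> p0; have hw : w < w + 1 by lra.
exists (next_root p w (w + 1) - w); first by rewrite subr_gt0 next_root_gt.
move=> x /andP[h1 h2]; apply: (@sgr_neighpr _ (w + 1)).
by rewrite /neighpr in_itv /= h1 /=; move: h2; rewrite addrC subrK.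
Qed.

Lemma left_nb (R : realType) (p : {poly R}) w : p != 0 ->
  exists2 e : R, 0 < e & forall x, w - e < x < w ->
    Num.sg p.[x] = (-1) ^+ (odd (\mu_w p)) * sgp_right p w.
Proof.
move=> p0; have hw : w - 1 < w by lra.
exists (w - prev_root p (w - 1) w); first by rewrite subr_gt0 prev_root_lt.
move=> x /andP[h1 h2]; apply: (@sgr_neighpl _ (w - 1)).
by rewrite /neighpl in_itv /= h2 andbT; move: h1; rewrite opprB addrC subrK.
Qed.

Lemma sgp_right_pm (R : realType) (p : {poly R}) w : p != 0 ->
  sgp_right p w = 1 \/ sgp_right p w = -1.
Proof.
move=> p0; have [e e0 H] := right_nb w p0.
have := sgp_right_eq0 w p; rewrite (negbTE p0).
rewrite -(H (w + e / 2)); last by apply/andP; split; lra.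
case: sgzP => _ h; by [auto | rewrite eqxx in h].
Qed.

Lemma sgr_ratfun (R : realType) (g1 g0 : {poly R}) x :
  Num.sg (ratfun_val g1 g0 x) = Num.sg ((g1 * g0).[x]).
Proof. by rewrite /ratfun_val hornerM !sgrM sgrV. Qed.

Lemma mu_mup (R : realType) (p : {poly R}) x : p != 0 -> \mu_x p = mup x p.
Proof.
move=> p0; apply/eqP; rewrite eqn_leq mup_geq // root_mu /=.
by rewrite -root_le_mu // -mup_geq.
Qed.

Lemma Ind_at_jump (R : realType) (g1 g0 : {poly R}) w : g1 != 0 -> g0 != 0 ->
  Ind_at g1 g0 w = jump g1 g0 w.
Proof.
move=> n1 n0; set P := g1 * g0.
have P0 : P != 0 by rewrite mulf_neq0.
have [e e0 HR] := right_nb w P0.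
have [e' e0' HL] := left_nb w P0.
rewrite /Ind_at /jump /pole_order n1 /= -!mu_mup //.
case: ifP => hodd; last by [].
have hlt : (\mu_w g1 < \mu_w g0)%N.
  by rewrite ltnNge; apply: contraTN hodd => h; rewrite (eqnP h).
have hmu : odd (\mu_w P) by rewrite mu_mul // oddD addbC -(oddB (ltnW hlt)).
rewrite hmu expr1 mulN1r in HL.
rewrite -/P; case: (sgp_right_pm w P0) => hs; rewrite hs in HR HL.
- have h : neg_left g1 g0 w /\ pos_right g1 g0 w.
    split.
    + by exists e' => // x hx; apply: sg_lt0; rewrite sgr_ratfun HL.
    + by exists e => // x hx; apply: sg_gt0; rewrite sgr_ratfun HR.
  by rewrite (asboolT h) hs ltr10 expr0.
- have h1 : ~ (neg_left g1 g0 w /\ pos_right g1 g0 w).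
    case=> _ hpr.
    have hR' : exists2 e : R, 0 < e & forall x, w < x < w + e -> Num.sg P.[x] = -1.
      by exists e.
    have [x [h1 h2]] := right_pick hR' hpr.
    by move: h1; rewrite -sgr_ratfun (gtr0_sg h2) => h; lra.
  have h2 : pos_left g1 g0 w /\ neg_right g1 g0 w.
    split.
    + by exists e' => // x hx; apply: sg_gt0; rewrite sgr_ratfun HL ?opprK.
    + by exists e => // x hx; apply: sg_lt0; rewrite sgr_ratfun HR.
  by rewrite (asboolF h1) (asboolT h2) hs ltrN10 expr1.
Qed.

Lemma pinf_nb (R : realType) (p : {poly R}) : p != 0 ->
  exists M : R, forall x, M < x -> Num.sg p.[x] = Num.sg (lead_coef p).
Proof.
move=> p0; exists (cauchy_bound p) => x hx.
apply: (@sgp_pinftyP _ (cauchy_bound p)).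
- by move=> y hy; apply: ge_cauchy_bound.
- by rewrite in_itv /= ltW.
Qed.

Lemma minf_nb (R : realType) (p : {poly R}) : p != 0 ->
  exists M : R, forall x, x < M ->
    Num.sg p.[x] = Num.sg ((-1) ^+ (size p).-1 * lead_coef p).
Proof.
move=> p0; exists (- cauchy_bound p) => x hx.
apply: (@sgp_minftyP _ (- cauchy_bound p)).
- by move=> y hy; apply: le_cauchy_bound.
- by rewrite in_itv /= ltW.
Qed.

Lemma size_mul_pred (R : realType) (g1 g0 : {poly R}) : g1 != 0 -> g0 != 0 ->
  (size (g1 * g0)).-1 = ((size g1).-1 + (size g0).-1)%N.
Proof.
move=> n1 n0; rewrite size_mul //.
have := size_poly_gt0 g1; have := size_poly_gt0 g0; rewrite n1 n0.
move: (size g1) (size g0) => a b ha hb; lia.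
Qed.

Lemma Ind_infty_eq (R : realType) (g1 g0 : {poly R}) : g1 != 0 -> g0 != 0 ->
  Ind_infty g1 g0 = - sgz (lead_coef (g1 * g0)) *+ odd (pole_order_infty g1 g0).
Proof.
move=> n1 n0; rewrite /Ind_infty; case: ifP => hodd; last by [].
set P := g1 * g0.
have P0 : P != 0 by rewrite mulf_neq0.
move: hodd; rewrite /pole_order_infty => hodd.
have hlt : ((size g0).-1 < (size g1).-1)%N.
  by rewrite ltnNge; apply: contraTN hodd => h; rewrite (eqnP h).
have hoddP : odd (size P).-1.
  by rewrite size_mul_pred // oddD -(oddB (ltnW hlt)).
have [M HP] := pinf_nb P0; have [M' HM] := minf_nb P0.
rewrite -signr_odd hoddP expr1 mulN1r sgrN in HM.
have L0 : lead_coef P != 0 by rewrite lead_coef_eq0.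
move: HP HM; rewrite -/P; case: (sgzP (lead_coef P)) => hL; first by rewrite hL eqxx in L0.
- move=> HP HM.
  have h1 : ~ (neg_pinfty g1 g0 /\ pos_ninfty g1 g0).
    case=> hn _.
    have hP' : exists M : R, forall x, M < x -> Num.sg P.[x] = 1 by exists M.
    have [x [h1 h2]] := pinf_pick hP' hn.
    by move: h1; rewrite -sgr_ratfun (ltr0_sg h2) => h; lra.
  have h2 : pos_pinfty g1 g0 /\ neg_ninfty g1 g0.
    split.
    + by exists M => x hx; apply: sg_gt0; rewrite sgr_ratfun HP.
    + by exists M' => x hx; apply: sg_lt0; rewrite sgr_ratfun HM.
  by rewrite (asboolF h1) (asboolT h2).
- move=> HP HM.
  have h1 : neg_pinfty g1 g0 /\ pos_ninfty g1 g0.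
    split.
    + by exists M => x hx; apply: sg_lt0; rewrite sgr_ratfun HP.
    + by exists M' => x hx; apply: sg_gt0; rewrite sgr_ratfun HM ?opprK.
  by rewrite (asboolT h1).
Qed.

Lemma crossR_eq (R : realType) (P : {poly R}) : P != 0 ->
  crossR P = sgz (lead_coef P) *+ odd (size P).-1.
Proof.
move=> P0; have L0 : lead_coef P != 0 by rewrite lead_coef_eq0.
rewrite /crossR /variation /sgp_minfty /sgp_pinfty sgz_sgr sgrM -signr_odd.
case: (odd _); rewrite ?expr1 ?expr0 ?sgrN1 ?sgr1 ?mul1r ?mulN1r;
  case: (sgzP (lead_coef P)) => hL; rewrite ?hL ?eqxx // in L0 *; 
  rewrite ?mulrN1 ?mulr1 ?mulNr ?opprK ?mul1r //.
all: by rewrite ?ltrN10 ?ltr10 ?ltxx ?ltr01.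
Qed.

Lemma cindexR_inv (R : realType) (p q : {poly R}) : p != 0 -> q != 0 ->
  cindexR q p + cindexR p q = crossR (p * q).
Proof.
move=> p0 q0.
have pq0 : p * q != 0 by rewrite mulf_neq0.
pose b := cauchy_bound (p * q).
have [lecb gecb] := pair (le_cauchy_bound pq0) (ge_cauchy_bound pq0).
have b0 : 0 < b by apply: cauchy_bound_gt0.
rewrite -(@cindexRP _ _ _ (-b) b); first last.
- by move=> x /gecb; rewrite rootM => /norP[].
- by move=> x /lecb; rewrite rootM => /norP[].
rewrite -(@cindexRP _ _ _ (-b) b); first last.
- by move=> x /gecb; rewrite rootM => /norP[].
- by move=> x /lecb; rewrite rootM => /norP[].
rewrite -(@crossRP _ _ (-b) b) //.
apply: cindex_inv.
- by rewrite gt0_cp.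
- by rewrite lecb // in_itv /= lexx.
- by rewrite gecb // in_itv /= lexx.
Qed.

Unset Implicit Arguments.
Theorem lemma55 (R : realType) (f1 f0 : {poly R}) :
  f0 != 0 -> f1 != 0 -> Ind_PR (- f0) f1 = Ind_PR f1 f0.
Proof.
move=> n0 n1.
have nN0 : -f0 != 0 by rewrite oppr_eq0.
have realE (g1 g0 : {poly R}) : g1 != 0 -> g0 != 0 -> Ind_real g1 g0 = cindexR g1 g0.
  by move=> a b; rewrite /Ind_real /cindexR; apply: eq_bigr => w _; apply: Ind_at_jump.
rewrite /Ind_PR !realE // !Ind_infty_eq //.
have hN : cindexR (-f0) f1 = - cindexR f0 f1.
  rewrite /cindexR -sumrN; apply: eq_bigr => w _.
  by rewrite -scaleN1r jump_mulCp sgzN1 mulN1r.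
have hinv := cindexR_inv n0 n1.
rewrite crossR_eq ?mulf_neq0 // in hinv.
rewrite hN.
have -> : cindexR f1 f0 = sgz (lead_coef (f0 * f1)) *+ odd (size (f0 * f1)).-1 - cindexR f0 f1.
  by rewrite -hinv addrK.
rewrite mulNr lead_coefN sgzN opprK (mulrC f1 f0) /pole_order_infty size_polyN.
rewrite size_mul_pred //.
set L := sgz _; set a := (size f0).-1; set b := (size f1).-1.
case: (leqP a b) => h.
- rewrite (_ : (a - b)%N = 0%N); last by apply/eqP; rewrite subn_eq0.
  rewrite oddB // oddD addbC.
  by case: (odd b (+) odd a); rewrite /= ?mulr1n ?mulr0n ?addr0 ?add0r // addrAC subrr add0r.
- rewrite (_ : (b - a)%N = 0%N); last by apply/eqP; rewrite subn_eq0 ltnW.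
  rewrite (oddB (ltnW h)) oddD.
  by case: (odd a (+) odd b); rewrite /= ?mulr1n ?mulr0n ?addr0 ?add0r // addrC.
Qed.
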